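(* Let $0\to K_i\to L_i\to M_i\to 0$ be a family of admissible short exact sequences in an exact category $\mathsf K$. Assume that the products $\prod_iK_i$, $\prod_iL_i$, $\prod_iM_i$ exist in $\mathsf K$, and that there exists an admissible epimorphism $q\colon A\to\prod_iM_i$ where $A\in\mathsf K$ satisfies $\mathrm{Ext}^1_{\mathsf K}(A,K_i)=0$ for all $i$. Then $0\to\prod_iK_i\to\prod_iL_i\to\prod_iM_i\to0$ (with the induced morphisms) is an admissible short exact sequence in $\mathsf K$.
   Context: $\mathsf K$ is an exact category in Quillen's sense and $\mathrm{Ext}^1_{\mathsf K}$ denotes Yoneda Ext in $\mathsf K$. Products are not assumed to be exact. *)

(* Defs.v *)
From Stdlib Require Import Relations.Relation_Operators.
From HB Require Import structures.
From mathcomp Require Import all_boot all_algebra.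
Set Implicit Arguments. Unset Strict Implicit. Unset Printing Implicit Defensive.
Import GRing.Theory.
Local Open Scope ring_scope.

Record AddCat := {
  obj : Type;
  cHom : obj -> obj -> zmodType;
  cmp : forall A B C : obj, cHom B C -> cHom A B -> cHom A C;
  idm : forall A : obj, cHom A A;
  compA : forall A B C D (h : cHom C D) (g : cHom B C) (f : cHom A B),
      cmp h (cmp g f) = cmp (cmp h g) f;
  comp1m : forall A B (f : cHom A B), cmp (idm B) f = f;
  compm1 : forall A B (f : cHom A B), cmp f (idm A) = f;
  compDl : forall A B C (g1 g2 : cHom B C) (f : cHom A B),
      cmp (g1 + g2) f = cmp g1 f + cmp g2 f;
  compDr : forall A B C (g : cHom B C) (f1 f2 : cHom A B),
      cmp g (f1 + f2) = cmp g f1 + cmp g f2;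
  zobj : obj;
  zobj_id : idm zobj = 0;
  biprod : obj -> obj -> obj;
  bi_inl : forall A B, cHom A (biprod A B);
  bi_inr : forall A B, cHom B (biprod A B);
  bi_pr1 : forall A B, cHom (biprod A B) A;
  bi_pr2 : forall A B, cHom (biprod A B) B;
  bi_pr1_inl : forall A B, cmp (bi_pr1 A B) (bi_inl A B) = idm A;
  bi_pr2_inr : forall A B, cmp (bi_pr2 A B) (bi_inr A B) = idm B;
  bi_pr1_inr : forall A B, cmp (bi_pr1 A B) (bi_inr A B) = 0;
  bi_pr2_inl : forall A B, cmp (bi_pr2 A B) (bi_inl A B) = 0;
  bi_sum : forall A B, cmp (bi_inl A B) (bi_pr1 A B)
                       + cmp (bi_inr A B) (bi_pr2 A B) = idm (biprod A B)
}.

Arguments cHom : clear implicits.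
Arguments cmp {_ _ _ _}.
Arguments idm {_}.
Notation "g \o' f" := (cmp g f) (at level 50, left associativity).

Section Notions.
Variable C : AddCat.
Implicit Types X Y : obj C.

Definition is_kernel K L M (i : cHom C K L) (p : cHom C L M) : Prop :=
  p \o' i = 0 /\
  forall X (g : cHom C X L), p \o' g = 0 -> exists! h : cHom C X K, i \o' h = g.

Definition is_cokernel K L M (i : cHom C K L) (p : cHom C L M) : Prop :=
  p \o' i = 0 /\
  forall X (g : cHom C L X), g \o' i = 0 -> exists! h : cHom C M X, h \o' p = g.

Definition is_iso X Y (f : cHom C X Y) : Prop :=
  exists g : cHom C Y X, g \o' f = idm X /\ f \o' g = idm Y.

Definition is_pushout A B A' B' (i : cHom C A B) (f : cHom C A A')
    (f' : cHom C B B') (i' : cHom C A' B') : Prop :=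
  f' \o' i = i' \o' f /\
  forall X (u : cHom C B X) (v : cHom C A' X), u \o' i = v \o' f ->
    exists! w : cHom C B' X, w \o' f' = u /\ w \o' i' = v.

Definition is_pullback A B A' B' (p : cHom C B A) (f : cHom C A' A)
    (f' : cHom C B' B) (p' : cHom C B' A') : Prop :=
  p \o' f' = f \o' p' /\
  forall X (u : cHom C X B) (v : cHom C X A'), p \o' u = f \o' v ->
    exists! w : cHom C X B', f' \o' w = u /\ p' \o' w = v.

Definition is_product (I : Type) (F : I -> obj C) (P : obj C)
    (pr : forall j, cHom C P (F j)) : Prop :=
  forall X (g : forall j, cHom C X (F j)),
    exists! h : cHom C X P, forall j, pr j \o' h = g j.
End Notions.

Record ExactCat := {
  ecat :> AddCat;
  conf : forall K L M : obj ecat, cHom ecat K L -> cHom ecat L M -> Prop;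
  conf_kc : forall K L M (i : cHom ecat K L) (p : cHom ecat L M),
      conf i p -> is_kernel i p /\ is_cokernel i p;
  conf_iso : forall K L M K' L' M' (i : cHom ecat K L) (p : cHom ecat L M)
      (i' : cHom ecat K' L') (p' : cHom ecat L' M')
      (a : cHom ecat K' K) (b : cHom ecat L' L) (c : cHom ecat M' M),
      conf i p -> is_iso a -> is_iso b -> is_iso c ->
      b \o' i' = i \o' a -> c \o' p' = p \o' b -> conf i' p';
  conf_id_mono : forall A, exists M (p : cHom ecat A M), conf (idm A) p;
  conf_id_epi : forall A, exists K (i : cHom ecat K A), conf i (idm A);
  conf_comp_mono : forall A B D (i : cHom ecat A B) (j : cHom ecat B D),
      (exists M (p : cHom ecat B M), conf i p) ->
      (exists M (p : cHom ecat D M), conf j p) ->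
      exists M (p : cHom ecat D M), conf (j \o' i) p;
  conf_comp_epi : forall A B D (p : cHom ecat A B) (q : cHom ecat B D),
      (exists K (i : cHom ecat K A), conf i p) ->
      (exists K (i : cHom ecat K B), conf i q) ->
      exists K (i : cHom ecat K A), conf i (q \o' p);
  conf_pushout : forall A B A' (i : cHom ecat A B) (f : cHom ecat A A'),
      (exists M (p : cHom ecat B M), conf i p) ->
      exists B' (f' : cHom ecat B B') (i' : cHom ecat A' B'),
        is_pushout i f f' i' /\ exists M (p : cHom ecat B' M), conf i' p;
  conf_pullback : forall A B A' (p : cHom ecat B A) (f : cHom ecat A' A),
      (exists K (i : cHom ecat K B), conf i p) ->
      exists B' (f' : cHom ecat B' B) (p' : cHom ecat B' A'),
        is_pullback p f f' p' /\ exists K (i : cHom ecat K B'), conf i p'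
}.

Section ExactNotions.
Variable E : ExactCat.

Definition adm_epi B A (p : cHom E B A) : Prop :=
  exists K (i : cHom E K B), conf i p.

Record extension (K A : obj E) := Ext {
  ext_obj : obj E; ext_i : cHom E K ext_obj; ext_p : cHom E ext_obj A }.

Definition ext_mor (K A : obj E) (e1 e2 : extension K A) : Prop :=
  conf (ext_i e1) (ext_p e1) /\ conf (ext_i e2) (ext_p e2) /\
  exists phi : cHom E (ext_obj e1) (ext_obj e2),
    phi \o' ext_i e1 = ext_i e2 /\ ext_p e2 \o' phi = ext_p e1.

Definition yoneda_equiv (K A : obj E) : extension K A -> extension K A -> Prop :=
  clos_refl_sym_trans (extension K A) (@ext_mor K A).

(** the split extension K -> K (+) A -> A, the zero of Yoneda Ext^1 *)
Definition split_ext (K A : obj E) : extension K A :=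
  @Ext K A (biprod K A) (bi_inl K A) (bi_pr2 K A).

Definition Ext1_zero (A K : obj E) : Prop :=
  forall e : extension K A, conf (ext_i e) (ext_p e) ->
    yoneda_equiv e (split_ext K A).
End ExactNotions.

(* Main.v *)
Require Import Defs.
From mathcomp Require Import all_boot all_algebra.
From Stdlib Require Import ClassicalEpsilon.
Set Implicit Arguments. Unset Strict Implicit.
Import GRing.Theory.
Local Open Scope ring_scope.
Local Notation compA := Defs.compA.

Section Gen.
Variable C : AddCat.

Lemma cmp0l (X Y Z : obj C) (f : cHom C X Y) : cmp (0 : cHom C Y Z) f = 0.
Proof.
have h := compDl (0 : cHom C Y Z) 0 f; rewrite addr0 in h.
by move/(congr1 (fun z => z - cmp 0 f)): h; rewrite addrK subrr.
Qed.

Lemma cmp0r (X Y Z : obj C) (g : cHom C Y Z) : cmp g (0 : cHom C X Y) = 0.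
Proof.
have h := compDr g (0 : cHom C X Y) 0; rewrite addr0 in h.
by move/(congr1 (fun z => z - cmp g 0)): h; rewrite addrK subrr.
Qed.

Lemma cmpNl (X Y Z : obj C) (g : cHom C Y Z) (f : cHom C X Y) : cmp (- g) f = - cmp g f.
Proof.
apply/eqP; rewrite -subr_eq0 opprK -compDl addNr; exact/eqP/cmp0l.
Qed.

Lemma cmpNr (X Y Z : obj C) (g : cHom C Y Z) (f : cHom C X Y) : cmp g (- f) = - cmp g f.
Proof.
apply/eqP; rewrite -subr_eq0 opprK -compDr addNr; exact/eqP/cmp0r.
Qed.

Lemma cmpBl (X Y Z : obj C) (g1 g2 : cHom C Y Z) (f : cHom C X Y) :
  cmp (g1 - g2) f = cmp g1 f - cmp g2 f.
Proof. by rewrite compDl cmpNl. Qed.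

Lemma cmpBr (X Y Z : obj C) (g : cHom C Y Z) (f1 f2 : cHom C X Y) :
  cmp g (f1 - f2) = cmp g f1 - cmp g f2.
Proof. by rewrite compDr cmpNr. Qed.

Lemma ker_mono K L M (i : cHom C K L) (p : cHom C L M) :
  is_kernel i p -> forall X (a b : cHom C X K), i \o' a = i \o' b -> a = b.
Proof.
move=> [hpi hu] X a b hab.
have h0 : p \o' (i \o' a) = 0 by rewrite compA hpi cmp0l.
have [h [_ hun]] := hu X _ h0.
by rewrite -(hun a erefl) -(hun b (esym hab)).
Qed.

Lemma coker_epi K L M (i : cHom C K L) (p : cHom C L M) :
  is_cokernel i p -> forall X (a b : cHom C M X), a \o' p = b \o' p -> a = b.
Proof.
move=> [hpi hu] X a b hab.
have h0 : (a \o' p) \o' i = 0 by rewrite -compA hpi cmp0r.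
have [h [_ hun]] := hu X _ h0.
by rewrite -(hun a erefl) -(hun b (esym hab)).
Qed.

Lemma prod_uniq (I : Type) (F : I -> obj C) (P : obj C) (pr : forall j, cHom C P (F j)) :
  is_product pr -> forall X (h1 h2 : cHom C X P), (forall j, pr j \o' h1 = pr j \o' h2) -> h1 = h2.
Proof.
move=> hP X h1 h2 he.
have [h [_ hun]] := hP X (fun j => pr j \o' h1).
by rewrite -(hun h1 (fun j => erefl)) -(hun h2 (fun j => esym (he j))).
Qed.

End Gen.

Section Ex.
Variable E : ExactCat.

Lemma conf_ker_replace K K' L M (i : cHom E K L) (i' : cHom E K' L) (p : cHom E L M) :
  conf i p -> is_kernel i' p -> conf i' p.
Proof.
move=> hc hk'.
have [hk _] := conf_kc hc.
have [a [ha _]] := hk.2 _ i' hk'.1.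
have [a' [ha' _]] := hk'.2 _ i hk.1.
apply: (conf_iso (a := a) (b := idm L) (c := idm M) hc).
- exists a'; split.
  + apply: (ker_mono hk'); by rewrite compA ha' ha compm1.
  + apply: (ker_mono hk); by rewrite compA ha ha' compm1.
- by exists (idm L); rewrite comp1m.
- by exists (idm M); rewrite comp1m.
- by rewrite comp1m.
- by rewrite comp1m compm1.
Qed.

Lemma conf_coker_replace K L M M' (i : cHom E K L) (p : cHom E L M) (p' : cHom E L M') :
  conf i p -> is_cokernel i p' -> conf i p'.
Proof.
move=> hc hk'.
have [_ hk] := conf_kc hc.
have [c [hcc _]] := hk'.2 _ p hk.1.
have [c' [hc' _]] := hk.2 _ p' hk'.1.
apply: (conf_iso (a := idm K) (b := idm L) (c := c) hc).
- by exists (idm K); rewrite comp1m.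
- by exists (idm L); rewrite comp1m.
- exists c'; split.
  + apply: (coker_epi hk'); by rewrite -compA hcc hc' comp1m.
  + apply: (coker_epi hk); by rewrite -compA hc' hcc comp1m.
- by rewrite comp1m compm1.
- by rewrite hcc compm1.
Qed.

Definition has_sec (K A : obj E) (e : extension K A) : Prop :=
  exists s : cHom E A (ext_obj e), ext_p e \o' s = idm A.

Lemma ext_mor_sec (K A : obj E) (e1 e2 : extension K A) :
  ext_mor e1 e2 -> (has_sec e1 <-> has_sec e2).
Proof.
case: e1 e2 => [X1 i1 p1] [X2 i2 p2] [hc1 [hc2 [phi [hpi hpp]]]] /=.
rewrite /has_sec /=; simpl in *; split.
- move=> [s1 hs1]; exists (phi \o' s1); by rewrite compA hpp.
- move=> [s2 hs2].
  have [[hk2 hk2u] _] := conf_kc hc2.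
  have [[hk1 hk1u] [hc1' hc1u]] := conf_kc hc1.
  have h0 : p2 \o' (idm X2 - (s2 \o' p2)) = 0.
    by rewrite cmpBr compm1 compA hs2 comp1m subrr.
  have [t [ht _]] := hk2u _ _ h0.
  have hti : t \o' i2 = idm K.
    apply: (ker_mono (conj hk2 hk2u)).
    by rewrite compA ht cmpBl comp1m -compA hk2 cmp0r subr0 compm1.
  set r := t \o' phi.
  have hri : r \o' i1 = idm K by rewrite /r -compA hpi.
  have h1 : (idm X1 - (i1 \o' r)) \o' i1 = 0.
    by rewrite cmpBl comp1m -compA hri compm1 subrr.
  have [s1 [hs1 _]] := hc1u _ _ h1.
  exists s1.
  apply: (coker_epi (conj hc1' hc1u)).
  by rewrite -compA hs1 cmpBr compm1 compA hc1' cmp0l subr0 comp1m.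
Qed.

Lemma yoneda_sec (K A : obj E) (e1 e2 : extension K A) :
  yoneda_equiv e1 e2 -> (has_sec e1 <-> has_sec e2).
Proof.
elim=> [x y h|x|x y _ h|x y z _ h1 _ h2].
- exact: ext_mor_sec.
- by [].
- by split; move=> ?; apply/h.
- by split; move=> ?; [apply/h2/h1 | apply/h1/h2].
Qed.

End Ex.

Lemma lift_exists (E : ExactCat) (K L M A : obj E) (i : cHom E K L) (p : cHom E L M)
  (hc : conf i p) (u : cHom E A M) (hA : Ext1_zero A K) :
  exists s : cHom E A L, p \o' s = u.
Proof.
have [B' [f'' [p'' [[hcomm hpb] [K'' [i'' hc'']]]]]] :=
  conf_pullback u (ex_intro _ K (ex_intro _ i hc)).
have [[hk hku] _] := conf_kc hc.
have h0 : p \o' i = u \o' (0 : cHom E K A) by rewrite hk cmp0r.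
have [i' [[hi1 hi2] hiu]] := hpb K i 0 h0.
have hker : is_kernel i' p''.
  split; first exact: hi2.
  move=> X h hh.
  have h1 : p \o' (f'' \o' h) = 0 by rewrite compA hcomm -compA hh cmp0r.
  have [t [ht htu]] := hku X _ h1.
  exists t; split.
  - have h2 : p \o' (f'' \o' h) = u \o' (0 : cHom E X A) by rewrite h1 cmp0r.
    have [w [_ hwu]] := hpb X (f'' \o' h) 0 h2.
    rewrite -(hwu h (conj erefl hh)); symmetry; apply: hwu; split.
      by rewrite compA hi1 ht.
    by rewrite compA hi2 cmp0l.
  - move=> t' ht'; apply: htu; by rewrite -ht' compA hi1.
have hc' := conf_ker_replace hc'' hker.
have hy := hA (Ext i' p'') hc'.
have hs : has_sec (Ext i' p'').
  apply/(yoneda_sec hy); exists (bi_inr K A); exact: bi_pr2_inr.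
case: hs => /= t ht.
exists (f'' \o' t); by rewrite compA hcomm -compA ht compm1.
Qed.

Theorem lemma8p3 (E : ExactCat) (I : Type) (K L M : I -> obj E)
  (i : forall j, cHom E (K j) (L j)) (p : forall j, cHom E (L j) (M j))
  (hconf : forall j, conf (i j) (p j))
  (PK PL PM : obj E)
  (prK : forall j, cHom E PK (K j)) (prL : forall j, cHom E PL (L j))
  (prM : forall j, cHom E PM (M j))
  (hPK : is_product prK) (hPL : is_product prL) (hPM : is_product prM)
  (A : obj E) (q : cHom E A PM) (hq : adm_epi q)
  (hA : forall j, Ext1_zero A (K j))
  (f : cHom E PK PL) (hf : forall j, prL j \o' f = i j \o' prK j)
  (g : cHom E PL PM) (hg : forall j, prM j \o' g = p j \o' prL j) :
  conf f g.
Proof.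
have hs0 : forall j, exists sj : cHom E A (L j), p j \o' sj = prM j \o' q :=
  fun j => lift_exists (hconf j) (prM j \o' q) (hA j).
pose sj j := proj1_sig (constructive_indefinite_description _ (hs0 j)).
have hsj : forall j, p j \o' sj j = prM j \o' q :=
  fun j => proj2_sig (constructive_indefinite_description _ (hs0 j)).
have [s [hs _]] := hPL A sj.
have hgs : g \o' s = q.
  apply: (prod_uniq hPM) => j; by rewrite compA hg -compA hs hsj.
have hpi : forall j, p j \o' i j = 0 := fun j => (conf_kc (hconf j)).1.1.
have hgf : g \o' f = 0.
  apply: (prod_uniq hPM) => j; by rewrite compA hg -compA hf compA hpi cmp0l cmp0r.
have hfk : is_kernel f g.
  split => // X h hh.
  have hj : forall j, p j \o' (prL j \o' h) = 0.
    by move=> j; rewrite compA -hg -compA hh cmp0r.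
  pose tj j := proj1_sig (constructive_indefinite_description _
                 ((conf_kc (hconf j)).1.2 X _ (hj j))).
  have htj : forall j, i j \o' tj j = prL j \o' h := fun j =>
    (proj2_sig (constructive_indefinite_description _
                 ((conf_kc (hconf j)).1.2 X _ (hj j)))).1.
  have [t [ht _]] := hPK X tj.
  have hft : f \o' t = h.
    apply: (prod_uniq hPL) => j; by rewrite compA hf -compA ht htj.
  exists t; split => // t' ht'.
  apply: (prod_uniq hPK) => j; apply: (ker_mono (conf_kc (hconf j)).1).
  by rewrite !compA -!hf -!compA ht' hft.
case: hq => D [d hdq].
have [[hqd _] [_ hqu]] := conf_kc hdq.
have hsd : g \o' (s \o' d) = 0 by rewrite compA hgs hqd.
have [j0 [hj0 _]] := hfk.2 D (s \o' d) hsd.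
have [P [f' [i' [[hpo hpou] [M'' [p'' hc'']]]]]] :=
  conf_pushout j0 (ex_intro _ PM (ex_intro _ q hdq)).
have hq0 : q \o' d = (0 : cHom E PK PM) \o' j0 by rewrite hqd cmp0l.
have [p' [[hp'1 hp'2] _]] := hpou PM q 0 hq0.
have hcok : is_cokernel i' p'.
  split; first exact: hp'2.
  move=> X h hh.
  have h1 : (h \o' f') \o' d = 0 by rewrite -compA hpo compA hh cmp0l.
  have [t [ht htu]] := hqu X _ h1.
  exists t; split.
  - have h2 : (h \o' f') \o' d = (0 : cHom E PK X) \o' j0 by rewrite h1 cmp0l.
    have [w [_ hwu]] := hpou X (h \o' f') 0 h2.
    rewrite -(hwu h (conj erefl hh)); symmetry; apply: hwu; split.
      by rewrite -compA hp'1 ht.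
    by rewrite -compA hp'2 cmp0r.
  - move=> t' ht'; apply: htu; by rewrite -ht' -compA hp'1.
have hc' := conf_coker_replace hc'' hcok.
have [phi [[hphi1 hphi2] _]] := hpou PL s f (esym hj0).
have hgphi : g \o' phi = p'.
  have [w [_ hwu]] := hpou PM q 0 hq0.
  rewrite -(hwu p' (conj hp'1 hp'2)); symmetry; apply: hwu; split.
    by rewrite -compA hphi1 hgs.
  by rewrite -compA hphi2 hgf.
have [[hk' hk'u] _] := conf_kc hc'.
have hfm := ker_mono hfk.
have phimono : forall X (x1 x2 : cHom E X P), phi \o' x1 = phi \o' x2 -> x1 = x2.
  move=> X x1 x2 hx; apply/eqP; rewrite -subr_eq0; apply/eqP.
  have hx0 : phi \o' (x1 - x2) = 0 by rewrite cmpBr hx subrr.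
  have hpx : p' \o' (x1 - x2) = 0 by rewrite -hgphi -compA hx0 cmp0r.
  have [y [hy _]] := hk'u X _ hpx.
  have hfy : f \o' y = f \o' 0 by rewrite cmp0r -hphi2 -compA hy hx0.
  by rewrite -hy (hfm _ _ _ hfy) cmp0r.
have [Q [pi2 [pi1 [[hpb _] [N [n hn]]]]]] :=
  conf_pullback g (ex_intro _ D (ex_intro _ d hdq)).
have hy0 : g \o' (pi1 - (s \o' pi2)) = 0 by rewrite cmpBr compA hgs hpb subrr.
have [y [hy _]] := hfk.2 Q _ hy0.
pose psi' := (f' \o' pi2) + (i' \o' y).
have hphipsi : phi \o' psi' = pi1.
  by rewrite /psi' compDr !compA hphi1 hphi2 hy addrC subrK.
have hcn := (conf_kc hn).2.
have hnk : pi1 \o' n = 0 := hcn.1.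
have hpsin : psi' \o' n = 0.
  apply: phimono; by rewrite compA hphipsi hnk cmp0r.
have [psi [hpsi _]] := hcn.2 P psi' hpsin.
have hphipsi' : phi \o' psi = idm PL.
  apply: (coker_epi hcn); by rewrite -compA hpsi hphipsi comp1m.
have hpsiphi : psi \o' phi = idm P.
  apply: phimono; by rewrite compA hphipsi' comp1m compm1.
apply: (conf_iso (a := idm PK) (b := psi) (c := idm PM) hc').
- by exists (idm PK); rewrite comp1m.
- by exists phi.
- by exists (idm PM); rewrite comp1m.
- by rewrite compm1 -hphi2 compA hpsiphi comp1m.
- by rewrite comp1m -hgphi -compA hphipsi' compm1.
Qed.
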